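(* For every integer $p\ge 2$, the path $P_p$ on $p$ vertices satisfies $\gamma_{[3R]}(P_p)=M_p$, where $M_p=4\lfloor p/3\rfloor$ if $p\equiv 0\pmod 3$, $M_p=4\lfloor p/3\rfloor+3$ if $p\equiv 1\pmod 3$, and $M_p=4\lfloor p/3\rfloor+4$ if $p\equiv 2\pmod 3$.
   Context: For a graph $\Gamma=(V,E)$ and $h:V\to\{0,1,2,3,4\}$, let $AN(v)=\{w\in N(v):h(w)\ge 1\}$, $AN[v]=AN(v)\cup\{v\}$ and $h(S)=\sum_{u\in S}h(u)$. $h$ is a triple Roman dominating function (3RDF) if every $v$ with $h(v)<3$ satisfies $h(AN[v])\ge|AN(v)|+3$. The triple Roman domination number $\gamma_{[3R]}(\Gamma)$ is the minimum weight $h(V)$ of a 3RDF of $\Gamma$. *)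

(* Defs.v *)
From mathcomp Require Import all_boot.
Set Implicit Arguments. Unset Strict Implicit. Unset Printing Implicit Defensive.

Section TRD.
Variables (T : finType) (e : rel T).

Definition AN (h : {ffun T -> 'I_5}) (v : T) : {set T} :=
  [set w | e v w & 0 < h w].
Definition ANc (h : {ffun T -> 'I_5}) (v : T) : {set T} := v |: AN h v.

Definition hsum (h : {ffun T -> 'I_5}) (S : {set T}) : nat :=
  \sum_(u in S) (h u : nat).

Definition is_3RDF (h : {ffun T -> 'I_5}) : bool :=
  [forall v, (h v < 3) ==> (#|AN h v| + 3 <= hsum h (ANc h v))].

Definition weight (h : {ffun T -> 'I_5}) : nat := \sum_(u : T) (h u : nat).

(* minimum weight of a 3RDF (the constant function 3 is always a 3RDF,
   so the minimum is taken over a nonempty set). *)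
Definition gamma3R : nat :=
  \big[minn/weight [ffun => inord 3]]_(h | is_3RDF h) weight h.
End TRD.

Definition path_rel (p : nat) : rel 'I_p :=
  fun i j => (i.+1 == j :> nat) || (j.+1 == i :> nat).
Arguments path_rel p : clear implicits.

Definition Mp (p : nat) : nat :=
  if p %% 3 == 0 then 4 * (p %/ 3)
  else if p %% 3 == 1 then 4 * (p %/ 3) + 3
  else 4 * (p %/ 3) + 4.

(* Main.v *)
Require Import Defs.
From mathcomp Require Import all_boot.
From mathcomp Require Import zify.

Definition ok3 (a b c : nat) : bool := (b < 3) ==> ((0 < a) + (0 < c) + 3 <= a + b + c).

Fixpoint okseq (l : seq nat) : bool :=
  match l with
  | a :: ((b :: c :: _) as t) => ok3 a b c && okseq t
  | _ => true
  end.

Definition Ktab : seq nat := [:: 8; 4; 9; 8; 7; 9; 8; 10; 9; 8; 10; 9; 8; 13; 12; 8; 4; 9; 8; 7; 9; 8; 10; 9; 8; 10; 9; 8; 13; 12; 5; 4; 6; 8; 7; 9; 8; 7; 6; 8; 10; 9; 8; 13; 12; 5; 4; 6; 8; 7; 3; 8; 7; 6; 8; 10; 9; 8; 13; 12; 5; 4; 0; 8; 7; 3; 8; 7; 6; 8; 10; 9; 8; 13; 12].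
Definition K a b r := nth 0 Ktab (a * 15 + b * 3 + r).

Definition tab_step : bool :=
  all (fun a => all (fun b => all (fun c => all (fun r =>
    ok3 a b c ==> (K a b ((r + 1) %% 3) + 4 <= 3 * b + K b c r))
   (iota 0 3)) (iota 0 5)) (iota 0 5)) (iota 0 5).
Lemma tab_stepP : tab_step. Proof. by vm_compute. Qed.

Lemma tab_step' a b c r : a < 5 -> b < 5 -> c < 5 -> r < 3 -> ok3 a b c ->
  K a b ((r + 1) %% 3) + 4 <= 3 * b + K b c r.
Proof.
move=> ha hb hc hr; have := tab_stepP.
move=> /allP /(_ a); rewrite mem_iota ha => /(_ isT).
move=> /allP /(_ b); rewrite mem_iota hb => /(_ isT).
move=> /allP /(_ c); rewrite mem_iota hc => /(_ isT).
move=> /allP /(_ r); rewrite mem_iota hr => /(_ isT).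
by move=> /implyP; apply.
Qed.

Lemma tab_base a : a < 5 -> K a 0 1 <= 4.
Proof. by move: a; do 5! case=> //. Qed.

Lemma tab_final b r : b < 5 -> r < 3 ->
  (if r == 0 then 8 else if r == 1 then 4 else 9) <= K 0 b r.
Proof. by move: b r; do 5! case=> //; do 3! case=> //. Qed.

Lemma okseq_cons3 a b t : t != [::] ->
  okseq [:: a, b & t] = ok3 a b (head 0 t) && okseq (b :: t).
Proof. by case: t. Qed.

Lemma lb_list s : forall a, all (fun x => x < 5) (a :: s) ->
  okseq (a :: s ++ [:: 0]) ->
  4 * (size s).+1 + K a (head 0 s) ((size s).+1 %% 3) <= 3 * sumn s + 8.
Proof.
elim: s => [|b s IH] a.
  by rewrite /=; move=> /andP [ha _] _; have := tab_base a ha; change (1 %% 3) with 1; lia.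
rewrite [all _ _]/= cat_cons => /and3P [ha hb hs].
rewrite okseq_cons3; last by case: s {IH hs}.
have -> : head 0 (s ++ [:: 0]) = head 0 s by case: s {IH hs}.
move=> /andP [hok hrest].
have := IH b; rewrite /= hb hs => /(_ isT hrest) => IH'.
have hc : head 0 s < 5 by case: s {IH IH' hrest hok} hs => //= c s /andP [].
have := tab_step' a b (head 0 s) ((size s).+1 %% 3) ha hb hc (ltn_pmod (size s).+1 (isT : 0 < 3)) hok.
have -> : ((size s).+1 %% 3 + 1) %% 3 = (size s).+2 %% 3.
  by rewrite modnDml addn1.
lia.
Qed.

Lemma okseqP l : okseq l <->
  (forall j, j.+2 < size l -> ok3 (nth 0 l j) (nth 0 l j.+1) (nth 0 l j.+2)).
Proof.
elim: l => [|a t IH]; first by [].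
case: t IH => [|b [|c u]] IH.
- by split => // _ [|j].
- by split => // _ [|j].
rewrite okseq_cons3 //=; split.
  move=> /andP [h1 h2] [|j] hj //=.
  by apply: (proj1 IH h2 j).
move=> H; apply/andP; split; first exact: (H 0).
by apply/IH => j hj; apply: (H j.+1).
Qed.

Lemma nbr_sum (i n : nat) (G : nat -> nat) :
  \sum_(0 <= j < n | (i.+1 == j) || (j.+1 == i)) G j =
  (if (0 < i) && (i.-1 < n) then G i.-1 else 0) + (if i.+1 < n then G i.+1 else 0).
Proof.
rewrite big_mkcond; elim: n => [|n IH]; first by rewrite big_geq //=; case: (0 < i).
rewrite big_nat_recr //= IH.
case: (boolP (i.+1 == n)) => [/eqP <-|H1].
  by case: i {IH} => [|i] /=; repeat case: ifP => ? //=; lia.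
case: (boolP (n.+1 == i)) => [/eqP <-|H2].
  by repeat case: ifP => ? //=; lia.
by rewrite /= addn0; repeat case: ifP => ? //=; lia.
Qed.

Definition sq {p : nat} (h : {ffun 'I_p -> 'I_5}) := [seq (h i : nat) | i <- enum 'I_p].
Lemma size_sq {p : nat} (h : {ffun 'I_p -> 'I_5})  : size (sq h) = p. Proof. by rewrite size_map size_enum_ord. Qed.
Lemma nth_sq {p : nat} (h : {ffun 'I_p -> 'I_5})  (i : 'I_p) : nth 0 (sq h) i = h i.
Proof. by rewrite (nth_map i) ?size_enum_ord // nth_ord_enum. Qed.
Lemma nth_sq_ge {p : nat} (h : {ffun 'I_p -> 'I_5})  j : p <= j -> nth 0 (sq h) j = 0.
Proof. by move=> H; rewrite nth_default // size_sq. Qed.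
Lemma nth_pad {p : nat} (h : {ffun 'I_p -> 'I_5})  k : nth 0 ((sq h) ++ [:: 0]) k = nth 0 (sq h) k.
Proof.
rewrite nth_cat; case: ifP => // /negbT; rewrite -leqNgt => hk; rewrite (nth_default 0 hk).
by case: (k - size (sq h)) => [|[|]].
Qed.

Lemma sum_nbr {p : nat} (F : 'I_p -> nat) (G : nat -> nat) (i : 'I_p) :
  (forall w : 'I_p, F w = G w) -> (forall j, p <= j -> G j = 0) ->
  \sum_(w | path_rel p i w) F w = (if 0 < i then G i.-1 else 0) + G i.+1.
Proof.
move=> FG G0.
rewrite (eq_bigr (fun w : 'I_p => G w)) //.
rewrite /path_rel -(big_mkord (fun j => (i.+1 == j) || (j.+1 == i)) G) nbr_sum.
have hi := ltn_ord i.
have -> : (0 < i) && (i.-1 < p) = (0 < i) by case: (0 < i) => //=; lia.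
by case: (ltnP i.+1 p) => // H; rewrite (G0 _ H).
Qed.

Lemma card_AN {p : nat} (h : {ffun 'I_p -> 'I_5})  (i : 'I_p) : #|AN (path_rel p) h i| =
  (if 0 < i then (0 < nth 0 (sq h) i.-1 : nat) else 0) + (0 < nth 0 (sq h) i.+1).
Proof.
rewrite -sum1_card (eq_bigl (fun w => path_rel p i w && (0 < h w))); last first.
  by move=> w; rewrite inE.
rewrite big_mkcondr /=.
rewrite (sum_nbr _ (fun j => (0 < nth 0 (sq h) j : nat))).
- by case: (0 < i).
- by move=> w; rewrite nth_sq; case: (0 < h w).
- by move=> j hj; rewrite nth_sq_ge.
Qed.

Lemma hsum_ANc {p : nat} (h : {ffun 'I_p -> 'I_5})  (i : 'I_p) : hsum h (ANc (path_rel p) h i) =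
  h i + ((if 0 < i then nth 0 (sq h) i.-1 else 0) + nth 0 (sq h) i.+1).
Proof.
rewrite /hsum /ANc big_setU1 /=; last first.
  rewrite inE /path_rel; apply/negP => /andP [/orP [] /eqP H _]; lia.
congr (_ + _).
rewrite (eq_bigl (fun w => path_rel p i w && (0 < h w))); last first.
  by move=> w; rewrite inE.
rewrite big_mkcondr /=.
rewrite (sum_nbr _ (fun j => nth 0 (sq h) j)) //.
- by move=> w; rewrite nth_sq; case: ifP => // /negbT; rewrite -leqNgt leqn0 => /eqP ->.
- by move=> j hj; rewrite nth_sq_ge.
Qed.

Lemma cond_eq {p : nat} (h : {ffun 'I_p -> 'I_5})  (i : 'I_p) :
  ((h i < 3) ==> (#|AN (path_rel p) h i| + 3 <= hsum h (ANc (path_rel p) h i)))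
  = ok3 (nth 0 (0 :: (sq h) ++ [:: 0]) i) (nth 0 (0 :: (sq h) ++ [:: 0]) i.+1)
        (nth 0 (0 :: (sq h) ++ [:: 0]) i.+2).
Proof.
rewrite card_AN hsum_ANc /= !nth_pad -nth_sq /ok3.
case: (nat_of_ord i) => [|k] /=; rewrite ?nth_pad; congr (_ ==> _); apply/idP/idP; lia.
Qed.

Lemma is3_okseq {p : nat} (h : {ffun 'I_p -> 'I_5})  : is_3RDF (path_rel p) h = okseq (0 :: (sq h) ++ [:: 0]).
Proof.
have Hs : size (0 :: (sq h) ++ [:: 0]) = p.+2 by rewrite /= size_cat size_sq addn1.
rewrite /is_3RDF; apply/idP/idP.
  move=> /forallP H; apply/okseqP => j; rewrite Hs !ltnS => hj.

  by have := H (Ordinal hj); rewrite cond_eq.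
by move=> /okseqP H; apply/forallP => i; rewrite cond_eq; apply: H; rewrite Hs !ltnS.
Qed.

Lemma weight_sq {p : nat} (h : {ffun 'I_p -> 'I_5})  : weight h = sumn (sq h).
Proof. by rewrite /weight sumnE big_map big_enum. Qed.

Definition tl r := if r == 0 then [::] else if r == 1 then [:: 3] else [:: 0; 4].
Definition Lp p := flatten (nseq (p %/ 3) [:: 0; 4; 0]) ++ tl (p %% 3).

Lemma ok3_40 x : ok3 4 0 x. Proof. by case: x. Qed.

Lemma okseq_blocks k T : (T = [:: 0] \/ T = [:: 3; 0] \/ T = [:: 0; 4; 0]) ->
  okseq (0 :: flatten (nseq k [:: 0; 4; 0]) ++ T).
Proof.
move=> HT; elim: k => [|k IH].
  by case: HT => [->|[->|->]].
have -> : flatten (nseq k.+1 [:: 0; 4; 0]) ++ T = 0 :: 4 :: 0 :: (flatten (nseq k [:: 0; 4; 0]) ++ T) by [].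
have : flatten (nseq k [:: 0; 4; 0]) ++ T != [::] by case: HT => [->|[->|->]]; case: (flatten _).
move: IH; case: (flatten _ ++ T) => [|c r] // IH _.
by rewrite okseq_cons3 // okseq_cons3 // okseq_cons3 // IH ok3_40.
Qed.

Lemma size_blocks k : size (flatten (nseq k [:: 0; 4; 0])) = 3 * k.
Proof. by elim: k => //= k IH; rewrite IH; lia. Qed.
Lemma sumn_blocks k : sumn (flatten (nseq k [:: 0; 4; 0])) = 4 * k.
Proof. by elim: k => //= k IH; rewrite IH; lia. Qed.
Lemma all_blocks k : all (fun x => x < 5) (flatten (nseq k [:: 0; 4; 0])).
Proof. by elim: k. Qed.

Lemma Lp_props p : 2 <= p ->
  [/\ size (Lp p) = p, sumn (Lp p) = Mp p, all (fun x => x < 5) (Lp p)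
   & okseq (0 :: Lp p ++ [:: 0])].
Proof.
move=> hp; rewrite /Lp /Mp.
have hd := divn_eq p 3; have hm := ltn_pmod p (isT : 0 < 3).
split.
- rewrite size_cat size_blocks /tl; case: ifP => /eqP H1; [|case: ifP => /eqP H2] => /=; lia.
- rewrite sumn_cat sumn_blocks /tl; case: ifP => /eqP H1; [|case: ifP => /eqP H2] => /=; lia.
- rewrite all_cat all_blocks /tl; case: ifP => // _; case: ifP => //.
- rewrite -catA; apply: okseq_blocks; rewrite /tl.
  by case: ifP => _; [left|case: ifP => _; right; [left|right]].
Qed.

Lemma bigmin_le_seq (I : eqType) (r : seq I) (P : pred I) (F : I -> nat) x0 i :
  i \in r -> P i -> \big[minn/x0]_(j <- r | P j) F j <= F i.
Proof.
elim: r => [|x r IH] //; rewrite inE big_cons => /orP [/eqP <- -> |ir Pi].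
  exact: geq_minl.
case: ifP => _; last exact: IH.
by rewrite geq_min IH ?orbT.
Qed.

Theorem proposition20 (p : nat) : 2 <= p -> gamma3R (path_rel p) = Mp p.
Proof.
move=> hp; apply/eqP; rewrite eqn_leq; apply/andP; split.
- have [hs hsum hall hok] := Lp_props p hp.
  pose h0 : {ffun 'I_p -> 'I_5} := [ffun i : 'I_p => inord (nth 0 (Lp p) i)].
  have Hsq : sq h0 = Lp p.
    rewrite /sq -[RHS](mkseq_nth 0) hs /mkseq -val_enum_ord -map_comp.
    apply: eq_map => i /=; rewrite ffunE inordK //.
    by move/(all_nthP 0): hall; apply; rewrite hs.
  have H3 : is_3RDF (path_rel p) h0 by rewrite is3_okseq Hsq.
  rewrite /gamma3R -hsum -Hsq -weight_sq.
  by apply: bigmin_le_seq; rewrite ?mem_index_enum.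
- rewrite /gamma3R; apply: (big_ind (fun x => Mp p <= x)).
  + rewrite /weight (eq_bigr (fun _ => 3)); last by move=> i _; rewrite ffunE inordK.
    rewrite sum_nat_const card_ord /Mp.
    have hd := divn_eq p 3; have hm := ltn_pmod p (isT : 0 < 3).
    case: ifP => /eqP H1; [|case: ifP => /eqP H2]; lia.
  + by move=> x y hx hy; rewrite leq_min hx hy.
  + move=> h; rewrite is3_okseq weight_sq => hok.
    have hall : all (fun x => x < 5) (0 :: sq h).
      by apply/allP => x /=; rewrite inE => /orP [/eqP -> //| /mapP [i _ ->]].
    have := lb_list (sq h) 0 hall hok.
    rewrite size_sq.
    have hb : head 0 (sq h) < 5 by case: (sq h) hall => //= x s /andP [].
    have := tab_final (head 0 (sq h)) _ hb (ltn_pmod p.+1 (isT : 0 < 3)).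
    move=> hK hL; rewrite /Mp.
    have hd := divn_eq p 3; have hm := ltn_pmod p (isT : 0 < 3).
    have E1 : p.+1 %% 3 = (p %% 3 + 1) %% 3 by rewrite modnDml addn1.
    rewrite E1 in hK hL; move: hm hd hK hL.
    case: (p %% 3) => [|[|[|]]] //= _ hd hK hL; lia.
Qed.
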